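(* Let $\rho\in[0,1)$, $\boldsymbol x\in\mathbb R^n\setminus\{\boldsymbol 0\}$ and $\boldsymbol g=\boldsymbol 1_m+\boldsymbol e\in\mathcal G_\rho$. Consider the expected objective $F(\boldsymbol\xi,\boldsymbol\gamma)=\mathbb E f(\boldsymbol\xi,\boldsymbol\gamma)=\frac1{2m}\|\boldsymbol\xi\boldsymbol\gamma^\top-\boldsymbol x\boldsymbol g^\top\|_F^2$ on $\mathbb R^n\times\Pi^m_+$, where $\Pi^m_+=\{\boldsymbol v\in\mathbb R^m_+:\boldsymbol 1_m^\top\boldsymbol v=m\}$. Write $\boldsymbol\gamma=\boldsymbol 1_m+\boldsymbol\varepsilon$ with $\boldsymbol\varepsilon\in\boldsymbol 1_m^\perp$. Then the only point $(\boldsymbol\xi,\boldsymbol\gamma)\in\mathbb R^n\times\Pi^m_+$ at which both $$\tfrac1m\big(\|\boldsymbol\gamma\|^2\boldsymbol\xi-(\boldsymbol\gamma^\top\boldsymbol g)\boldsymbol x\big)=\boldsymbol 0\quad\text{and}\quad \tfrac1m\big(\|\boldsymbol\xi\|^2\boldsymbol\varepsilon-(\boldsymbol\xi^\top\boldsymbol x)\boldsymbol e\big)=\boldsymbol 0$$ (i.e. the expected gradient in $\boldsymbol\xi$ and the expected projected gradient in $\boldsymbol\gamma$ vanish) is $(\boldsymbol\xi,\boldsymbol\gamma)=(\boldsymbol x,\boldsymbol g)$. Moreover, the expected projected Hessian at this point, $$\boldsymbol H=\frac1m\begin{pmatrix}\|\boldsymbol g\|^2\boldsymbol I_n & \boldsymbol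 x\boldsymbol e^\top\\ \boldsymbol e\boldsymbol x^\top & \|\boldsymbol x\|^2\boldsymbol P\end{pmatrix},$$ satisfies $\boldsymbol u^\top\boldsymbol H\boldsymbol u>0$ for every nonzero $\boldsymbol u\in\mathcal V:=\mathbb R^n\times\boldsymbol 1_m^\perp$.
   Context: $\boldsymbol 1_m^\perp=\{\boldsymbol v\in\mathbb R^m:\boldsymbol 1_m^\top\boldsymbol v=0\}$ and $\boldsymbol P=\boldsymbol I_m-\frac1m\boldsymbol 1_m\boldsymbol 1_m^\top$ is the orthogonal projector onto it. For $\rho\in[0,1)$, $\mathcal G_\rho=\{\boldsymbol 1_m+\boldsymbol e:\ \boldsymbol e\in\boldsymbol 1_m^\perp,\ \|\boldsymbol e\|_\infty\le\rho\}$. The objective is $f(\boldsymbol\xi,\boldsymbol\gamma)=\frac1{2mp}\sum_{l=1}^p\|\mathrm{diag}(\boldsymbol\gamma)\boldsymbol A_l\boldsymbol\xi-\mathrm{diag}(\boldsymbol g)\boldsymbol A_l\boldsymbol x\|^2$ where the rows of the matrices $\boldsymbol A_l\in\mathbb R^{m\times n}$ are i.i.d. centred isotropic random vectors ($\mathbb E\boldsymbol a\boldsymbol a^\top=\boldsymbol I_n$); its expectation is the $F$ given in the claim. *)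

(* Defs.v *)
(* purely algebraic statement over an arbitrary real field. *)
From HB Require Import structures.
From mathcomp Require Import all_boot all_order all_algebra.
Set Implicit Arguments. Unset Strict Implicit. Unset Printing Implicit Defensive.
Import Order.TTheory GRing.Theory Num.Theory.
Local Open Scope ring_scope.

Section Defs.
Variable R : realFieldType.

Definition ones k : 'cV[R]_k := const_mx 1.

Definition dotv k (u v : 'cV[R]_k) : R := (u^T *m v) 0 0.
Definition sqnorm k (v : 'cV[R]_k) : R := dotv v v.

Definition orth1 k (v : 'cV[R]_k) : Prop := dotv (ones k) v = 0.

Definition Pmx k : 'M[R]_k := 1%:M - (k%:R)^-1 *: (ones k *m (ones k)^T).

Definition inG k (rho : R) (g : 'cV[R]_k) : Prop :=
  orth1 (g - ones k) /\ forall i, `|(g - ones k) i 0| <= rho.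

Definition inPiPlus k (v : 'cV[R]_k) : Prop :=
  (forall i, 0 <= v i 0) /\ dotv (ones k) v = k%:R.

Definition gradXi n m (x : 'cV[R]_n) (g : 'cV[R]_m) xi gam : 'cV[R]_n :=
  (m%:R)^-1 *: (sqnorm gam *: xi - dotv gam g *: x).

Definition gradGam n m (x : 'cV[R]_n) (g : 'cV[R]_m) (xi : 'cV[R]_n) gam : 'cV[R]_m :=
  (m%:R)^-1 *: (sqnorm xi *: (gam - ones m) - dotv xi x *: (g - ones m)).

Definition Hmx n m (x : 'cV[R]_n) (g : 'cV[R]_m) : 'M[R]_(n + m) :=
  (m%:R)^-1 *: block_mx (sqnorm g *: (1%:M : 'M[R]_n)) (x *m (g - ones m)^T)
                        ((g - ones m) *m x^T) (sqnorm x *: Pmx m).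

End Defs.

(* Main.v *)
Require Import Defs.
From HB Require Import structures.
From mathcomp Require Import all_boot all_order all_algebra.
From mathcomp Require Import ring lra.
Import Order.TTheory GRing.Theory Num.Theory.
Set Implicit Arguments. Unset Strict Implicit.
Local Open Scope ring_scope.

Section H.
Variable R : realFieldType.

Lemma dotvE k (u v : 'cV[R]_k) : dotv u v = \sum_i u i 0 * v i 0.
Proof. by rewrite /dotv mxE; apply: eq_bigr => i _; rewrite mxE. Qed.

Lemma dotvC k (u v : 'cV[R]_k) : dotv u v = dotv v u.
Proof. by rewrite !dotvE; apply: eq_bigr => i _; rewrite mulrC. Qed.

Lemma dotvDl k (u w v : 'cV[R]_k) : dotv (u + w) v = dotv u v + dotv w v.
Proof. by rewrite !dotvE -big_split; apply: eq_bigr => i _; rewrite mxE mulrDl. Qed.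

Lemma dotvBl k (u w v : 'cV[R]_k) : dotv (u - w) v = dotv u v - dotv w v.
Proof. by rewrite !dotvE -sumrB; apply: eq_bigr => i _; rewrite !mxE mulrBl. Qed.

Lemma dotvZl k a (u v : 'cV[R]_k) : dotv (a *: u) v = a * dotv u v.
Proof. by rewrite !dotvE mulr_sumr; apply: eq_bigr => i _; rewrite mxE mulrA. Qed.

Lemma dotvDr k (u w v : 'cV[R]_k) : dotv v (u + w) = dotv v u + dotv v w.
Proof. by rewrite !(dotvC v) dotvDl. Qed.
Lemma dotvBr k (u w v : 'cV[R]_k) : dotv v (u - w) = dotv v u - dotv v w.
Proof. by rewrite !(dotvC v) dotvBl. Qed.
Lemma dotvZr k a (u v : 'cV[R]_k) : dotv v (a *: u) = a * dotv v u.
Proof. by rewrite !(dotvC v) dotvZl. Qed.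

Lemma dot11 k : dotv (ones R k) (ones R k) = k%:R.
Proof. by rewrite dotvE (eq_bigr (fun _ => 1)) ?sumr_const ?card_ord // => i _; rewrite !mxE mulr1. Qed.

Lemma sqnorm_ge0 k (v : 'cV[R]_k) : 0 <= sqnorm v.
Proof. by rewrite /sqnorm dotvE; apply: sumr_ge0 => i _; rewrite -expr2 sqr_ge0. Qed.

Lemma sqnorm_gt0 k (v : 'cV[R]_k) : v != 0 -> 0 < sqnorm v.
Proof.
move=> nz; rewrite lt_def sqnorm_ge0 andbT; apply: contra nz => /eqP H.
apply/eqP/matrixP => i j; rewrite (ord1 j) mxE.
have := @psumr_eq0P _ _ predT (fun i => v i 0 * v i 0).
rewrite -dotvE; move=> /(_ (fun i _ => ltac:(by rewrite -expr2 sqr_ge0)) H i isT).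
by move/eqP; rewrite mulf_eq0 orbb => /eqP.
Qed.

Lemma quad1 p q (u : 'cV[R]_p) (v : 'cV[R]_q) (w : 'cV[R]_q) (z : 'cV[R]_p) :
  (u^T *m (z *m w^T) *m v) 0 0 = dotv u z * dotv w v.
Proof.
rewrite !mulmxA -(mulmxA _ w^T) /dotv mxE big_ord1 //.
Qed.
End H.
Section H2.
Variable R : realFieldType.
Lemma prodsum p q (f : 'I_p -> R) (g : 'I_q -> R) :
  (\sum_i f i) * (\sum_j g j) = \sum_i \sum_j f i * g j.
Proof. by rewrite mulr_suml; apply: eq_bigr => i _; rewrite mulr_sumr. Qed.

Lemma frob p q (e u : 'cV[R]_p) (a x : 'cV[R]_q) :
  sqnorm e * sqnorm a + 2 * (dotv e u * dotv a x) + sqnorm u * sqnorm x =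
  \sum_i \sum_j (e i 0 * a j 0 + u i 0 * x j 0) ^+ 2.
Proof.
rewrite /sqnorm !dotvE !prodsum mulr_sumr -!big_split; apply: eq_bigr => i _.
rewrite mulr_sumr -!big_split; apply: eq_bigr => j _ /=; ring.
Qed.

Lemma quadP k (u : 'cV[R]_k) :
  (u^T *m Pmx R k *m u) 0 0 = dotv u u - k%:R^-1 * (dotv u (ones R k) * dotv (ones R k) u).
Proof.
rewrite /Pmx mulmxBr mulmxBl mulmx1 -scalemxAr -scalemxAl.
have hB : forall A B : 'M[R]_1, (A - B) 0 0 = A 0 0 - B 0 0 by move=> A B; rewrite !mxE.
have hZ : forall c (A : 'M[R]_1), (c *: A) 0 0 = c * A 0 0 by move=> c A; rewrite !mxE.
by rewrite hB hZ quad1.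
Qed.
End H2.
Section H3.
Variable R : realFieldType.
Lemma hess_form n m (x : 'cV[R]_n) (g : 'cV[R]_m) u1 u2 :
  ((col_mx u1 u2)^T *m Hmx x g *m col_mx u1 u2) 0 0 =
  m%:R^-1 * (sqnorm g * dotv u1 u1 + dotv u2 (g - ones R m) * dotv x u1
    + (dotv u1 x * dotv (g - ones R m) u2 + sqnorm x * (u2^T *m Pmx R m *m u2) 0 0)).
Proof.
rewrite /Hmx tr_col_mx -scalemxAr -scalemxAl mul_row_block mul_row_col.
have hD : forall A B : 'M[R]_1, (A + B) 0 0 = A 0 0 + B 0 0 by move=> A B; rewrite !mxE.
have hZ : forall c (A : 'M[R]_1), (c *: A) 0 0 = c * A 0 0 by move=> c A; rewrite !mxE.
rewrite hZ !mulmxDl !hD -!scalemxAr -!scalemxAl !hZ mulmx1 !quad1.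
by rewrite -mulmxDl quad1.
Qed.
End H3.

Theorem mainTheorem1 (R : realFieldType) (n m : nat) (rho : R)
    (x : 'cV[R]_n) (g : 'cV[R]_m) :
  (0 < m)%N -> 0 <= rho -> rho < 1 -> x != 0 -> inG rho g ->
  (inPiPlus g /\
   forall (xi : 'cV[R]_n) (gam : 'cV[R]_m), inPiPlus gam ->
     (gradXi x g xi gam = 0 /\ gradGam x g xi gam = 0 <-> xi = x /\ gam = g)) /\
  (forall (u1 : 'cV[R]_n) (u2 : 'cV[R]_m), orth1 u2 -> col_mx u1 u2 != 0 ->
     0 < ((col_mx u1 u2)^T *m Hmx x g *m col_mx u1 u2) 0 0).
Proof.
move=> m0 rho0 rho1 xnz [ge gb].
have mR : (0 : R) < m%:R by rewrite ltr0n.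
have mne : (m%:R)^-1 != 0 :> R by rewrite invr_eq0 gt_eqF.
have gpos : forall i, 1 - rho <= g i 0.
  move=> i; have := gb i; rewrite ler_norml => /andP[h _]; move: h; rewrite !mxE; lra.
have dotv0 : forall k (v : 'cV[R]_k), dotv 0 v = 0.
  by move=> k v; rewrite dotvE big1 // => i _; rewrite mxE mul0r.
have sqdec : forall v : 'cV[R]_m, dotv (ones R m) (v - ones R m) = 0 ->
    sqnorm v = m%:R + sqnorm (v - ones R m).
  move=> v hv; rewrite /sqnorm.
  have : v = (v - ones R m) + ones R m by rewrite subrK.
  move: (v - ones R m) hv => w hv ->.
  rewrite dotvDl !dotvDr dot11 !(dotvC w (ones R m)) hv; lra.
have gPi : inPiPlus g.
  split => [i|]; first by have := gpos i; lra.
  have -> : g = (g - ones R m) + ones R m by rewrite subrK.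
  by rewrite dotvDr dot11 ge add0r.
have sx : 0 < sqnorm x by apply: sqnorm_gt0.
split; [split => // xi gam [gampos gamsum]; split | ].
- move=> [h1 h2].
  have eps0 : dotv (ones R m) (gam - ones R m) = 0 by rewrite dotvBr gamsum dot11 subrr.
  have a_eq := sqdec gam eps0.
  have b_eq : dotv gam g = m%:R + dotv (gam - ones R m) (g - ones R m).
    have : gam = (gam - ones R m) + ones R m by rewrite subrK.
    move: (gam - ones R m) eps0 => w eps0 ->.
    have : g = (g - ones R m) + ones R m by rewrite subrK.
    move: (g - ones R m) ge => w' ge ->.
    rewrite dotvDl !dotvDr dot11 !(dotvC w (ones R m)) eps0 ge; lra.
  have apos : 0 < sqnorm gam by rewrite a_eq; have := sqnorm_ge0 (gam - ones R m); lra.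
  have bpos : 0 < dotv gam g.
    have hs : \sum_i gam i 0 = m%:R.
      by rewrite -gamsum dotvE; apply: eq_bigr => i _; rewrite mxE mul1r.
    have : \sum_i gam i 0 * (1 - rho) <= \sum_i gam i 0 * g i 0.
      by apply: ler_sum => i _; apply: ler_wpM2l.
    rewrite -mulr_suml hs -dotvE => h; have : 0 < m%:R * (1 - rho) by apply: mulr_gt0; lra.
    lra.
  set A := sqnorm gam in h1 apos a_eq; set B := dotv gam g in h1 bpos b_eq.
  move: h1; rewrite /gradXi => /eqP; rewrite scaler_eq0 (negbTE mne) /= subr_eq0 => /eqP h1.
  have hxi : xi = (B / A) *: x.
    by rewrite mulrC -scalerA -h1 scalerA mulVf ?scale1r // gt_eqF.
  set c := B / A in hxi.
  have cA : c * A = B by rewrite /c divfK // gt_eqF.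
  have c0 : c != 0 by rewrite /c mulf_eq0 invr_eq0 !gt_eqF.
  move: h2; rewrite /gradGam => /eqP; rewrite scaler_eq0 (negbTE mne) /= subr_eq0 => /eqP h2.
  move: h2; rewrite hxi /sqnorm dotvZl dotvZr dotvZl -/(sqnorm x) => h2.
  have he : c *: (gam - ones R m) = g - ones R m.
    have csx : c * sqnorm x != 0 by rewrite mulf_eq0 negb_or c0 gt_eqF.
    apply: (scalerI csx); rewrite scalerA. rewrite -h2; congr (_ *: _); ring.
  have c1 : c = 1.
    move: b_eq; rewrite -he dotvZr -/(sqnorm _) -cA a_eq => h.
    have : (c - 1) * m%:R = 0 by move: h; lra.
    by move/eqP; rewrite mulf_eq0 (gt_eqF mR) orbF subr_eq0 => /eqP.
  move: he; rewrite c1 !scale1r => he; split => //.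
  by move: he => /eqP; rewrite (inj_eq (addIr _)) => /eqP.
- by move=> [-> ->]; rewrite /gradXi /gradGam /sqnorm !subrr !scaler0.
move=> u1 u2 hu2 nz; rewrite hess_form quadP (dotvC u2 (ones R m)) hu2 mul0r mulr0 subr0.
rewrite (sqdec g ge) (dotvC u2) (dotvC x).
have F := frob (g - ones R m) u2 u1 x.
have Fpos : 0 <= \sum_i \sum_j ((g - ones R m) i 0 * u1 j 0 + u2 i 0 * x j 0) ^+ 2.
  by apply: sumr_ge0 => i _; apply: sumr_ge0 => j _; apply: sqr_ge0.
apply: mulr_gt0; first by rewrite invr_gt0.
have := sqnorm_ge0 (g - ones R m); have := sqnorm_ge0 u2; have := sqnorm_ge0 u1.
rewrite /sqnorm in F |- * => h1 h2 h3.
have [u10|u1nz] := eqVneq u1 0.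
  rewrite u10.
  rewrite !dotv0 !mulr0 !mul0r !add0r.
  have u2nz : u2 != 0.
    by apply: contra nz => /eqP u20; rewrite u20 u10 col_mx0.
  apply: mulr_gt0 => //; exact: sqnorm_gt0.
have := sqnorm_gt0 u1nz; rewrite /sqnorm => hp.
nra.
Qed.
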